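(* Let $G$ be a group, $N\trianglelefteq G$ and $\mathcal{H}$ a family of proper subgroups of $G$ that is strongly divided by $N$. Let $\widetilde{\mathcal{H}}$ denote the family of all finite (nonempty) intersections of elements of $\mathcal{H}$. Then $\widetilde{\mathcal{H}}$ is divided by $N$; moreover (1) $\widetilde{\mathcal{H}}^N=\widetilde{\mathcal{H}^N}$, the family of all finite intersections of elements of $\mathcal{H}^N$, and (2) $\overline{\widetilde{\mathcal{H}}}=\widetilde{\overline{\mathcal{H}}}$, the family of all finite intersections of elements of $\overline{\mathcal{H}}$.
   Context: For a family $\mathcal{K}$ of proper subgroups of $G$ write $\mathcal{K}_N=\{H\in\mathcal{K}: HN\neq G\}$ and $\mathcal{K}^N=\{K\in\mathcal{K}: KN=G\}$; for $H\le G$ let $\overline{H}$ be its image in $G/N$ and $\overline{\mathcal{K}}=\{\overline{H}: H\in\mathcal{K}_N\}$. $\mathcal{K}$ is divided by $N$ if (1) $HN\in\mathcal{K}$ for all $H\in\mathcal{K}_N$, and (2) $HN\cap K\in\mathcal{K}$ for all $H\in\mathcal{K}_N$, $K\in\mathcal{K}^N$. $\mathcal{K}$ is strongly divided by $N$ if (1) $N\subseteq H$ for all $H\in\mathcal{K}_N$, and (2) $(K_1\cap\dots\cap K_m)N=G$ for all finite collections $K_1,\dots,K_m\in\mathcal{K}^N$. *)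

(* Defs.v *)
From Stdlib Require Import List.
Import ListNotations.

Record group := Group {
  carrier :> Type;
  gmul : carrier -> carrier -> carrier;
  gone : carrier;
  ginv : carrier -> carrier;
  gmulA : forall x y z, gmul x (gmul y z) = gmul (gmul x y) z;
  gmul1 : forall x, gmul gone x = x;
  gmulV : forall x, gmul (ginv x) x = gone
}.
Arguments gmul {g} _ _.
Arguments gone {g}.
Arguments ginv {g} _.

Definition set (T : Type) := T -> Prop.
Definition family (T : Type) := set (set T).

Definition setI {T : Type} (A B : set T) : set T := fun x => A x /\ B x.
Definition setT {T : Type} : set T := fun _ => True.
Definition subset {T : Type} (A B : set T) : Prop := forall x, A x -> B x.

Definition bigcap {T : Type} (Ks : list (set T)) : set T :=
  fold_right setI setT Ks.

Definition tilde {T : Type} (K : family T) : family T :=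
  fun H => exists Ks : list (set T),
    Ks <> [] /\ (forall K0, In K0 Ks -> K K0) /\ H = bigcap Ks.

Definition is_subgroup {G : group} (H : set G) : Prop :=
  H gone /\
  (forall x y, H x -> H y -> H (gmul x y)) /\
  (forall x, H x -> H (ginv x)).

Definition is_normal {G : group} (N : set G) : Prop :=
  is_subgroup N /\
  forall g n, N n -> N (gmul (ginv g) (gmul n g)).

Definition proper_subgroup {G : group} (H : set G) : Prop :=
  is_subgroup H /\ exists g, ~ H g.

Definition family_of_proper_subgroups {G : group} (K : family G) : Prop :=
  forall H, K H -> proper_subgroup H.

Definition setmul {G : group} (H N : set G) : set G :=
  fun x => exists h n, H h /\ N n /\ x = gmul h n.

Definition full {G : group} (S : set G) : Prop := forall x, S x.

(* K_N = {H in K : HN <> G},  K^N = {K in K : KN = G} *)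
Definition fam_sub {G : group} (K : family G) (N : set G) : family G :=
  fun H => K H /\ ~ full (setmul H N).
Definition fam_sup {G : group} (K : family G) (N : set G) : family G :=
  fun H => K H /\ full (setmul H N).

Definition divided_by {G : group} (K : family G) (N : set G) : Prop :=
  (forall H, fam_sub K N H -> K (setmul H N)) /\
  (forall H K0, fam_sub K N H -> fam_sup K N K0 -> K (setI (setmul H N) K0)).

Definition strongly_divided_by {G : group} (K : family G) (N : set G) : Prop :=
  (forall H, fam_sub K N H -> subset N H) /\
  (forall Ks : list (set G), Ks <> [] ->
     (forall K0, In K0 Ks -> fam_sup K N K0) -> full (setmul (bigcap Ks) N)).

Definition coset {G : group} (N : set G) (x : G) : set G :=
  fun y => exists n, N n /\ y = gmul x n.

Definition quot {G : group} (N : set G) : Type :=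
  { S : set G | exists x, S = coset N x }.

Definition qproj {G : group} (N : set G) (x : G) : quot N :=
  exist _ (coset N x) (ex_intro _ x eq_refl).

Definition bar {G : group} (N : set G) (H : set G) : set (quot N) :=
  fun q => exists h, H h /\ q = qproj N h.

(* \overline{K} = { \overline{H} : H in K_N } *)
Definition bar_family {G : group} (K : family G) (N : set G) : family (quot N) :=
  fun Q => exists H, fam_sub K N H /\ Q = bar N H.

(* Main.v *)
Require Import Defs.
From Stdlib Require Import List.
From Stdlib Require Import FunctionalExtensionality PropExtensionality ProofIrrelevance Classical.
Import ListNotations.

Lemma mulV1 (G:group) (x:G) : gmul x (ginv x) = gone.
Proof.
  set (e := gmul x (ginv x)).
  assert (He : gmul e e = e).
  { unfold e. rewrite <- gmulA. rewrite (gmulA G (ginv x) x (ginv x)).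
    rewrite gmulV, gmul1. reflexivity. }
  transitivity (gmul (ginv e) (gmul e e)).
  - rewrite gmulA, gmulV, gmul1. reflexivity.
  - rewrite He. apply gmulV.
Qed.

Lemma mul1r (G:group) (x:G) : gmul x gone = x.
Proof. rewrite <- (gmulV G x), gmulA, mulV1, gmul1. reflexivity. Qed.

Lemma bigcap_In {T} (L : list (set T)) x : bigcap L x <-> forall A, In A L -> A x.
Proof.
  induction L as [|a L IH]; simpl.
  - split; [intros _ A []| intros; exact I].
  - unfold setI. rewrite IH. split.
    + intros [Ha Hl] A [<-|HA]. exact Ha. exact (Hl A HA).
    + intros Hall; split; [apply Hall; left; reflexivity | intros A HA; apply Hall; right; exact HA].
Qed.

Lemma set_ext {T} (A B : set T) : (forall x, A x <-> B x) -> A = B.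
Proof. intros H; apply functional_extensionality; intros x; apply propositional_extensionality; auto. Qed.

Lemma fam_ext {T} (A B : family T) : (forall x, A x <-> B x) -> A = B.
Proof. intros H; apply functional_extensionality; intros x; apply propositional_extensionality; auto. Qed.

Lemma setmul_mono {G:group} (A B N : set G) : subset A B -> forall x, setmul A N x -> setmul B N x.
Proof. intros S x (h & n & Hh & Hn & ->). exists h, n; auto. Qed.


Lemma bigcap_app {T} (L1 L2 : list (set T)) : bigcap (L1 ++ L2) = setI (bigcap L1) (bigcap L2).
Proof.
  apply set_ext; intros x. unfold setI. rewrite !bigcap_In. split.
  - intros Hx; split; intros A HA; apply Hx; apply in_or_app; auto.
  - intros [H1 H2] A HA. apply in_app_or in HA. destruct HA as [HA|HA]; [apply H1|apply H2]; exact HA.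
Qed.

Section S.
Variable G : group.
Variable N : set G.
Variable H : family G.
Hypothesis NS : is_subgroup N.
Hypothesis fps : family_of_proper_subgroups H.
Hypothesis sd : strongly_divided_by H N.

Lemma full_sup LB :
  (forall B, In B LB -> fam_sup H N B) -> full (setmul (bigcap LB) N).
Proof.
  intros HB. destruct LB as [|b LB].
  - intros x. exists x, gone. split; [exact I|]. split; [apply (proj1 NS)|].
    symmetry; apply mul1r.
  - apply (proj2 sd); [discriminate | exact HB].
Qed.

Lemma sub_props A : fam_sub H N A -> is_subgroup A /\ subset N A.
Proof.
  intros HA. split. apply (fps A (proj1 HA)). apply (proj1 sd A HA).
Qed.

Lemma split_list L : (forall K, In K L -> H K) ->
  exists LA LB, (forall A, In A LA -> fam_sub H N A) /\
    (forall B, In B LB -> fam_sup H N B) /\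
    (forall x, bigcap L x <-> bigcap LA x /\ bigcap LB x).
Proof.
  induction L as [|a L IH]; intros HL.
  - exists [], []. split; [intros A []|]. split; [intros A []|]. simpl. tauto.
  - destruct IH as (LA & LB & HA & HB & Hx). { intros K HK; apply HL; right; auto. }
    destruct (classic (full (setmul a N))) as [Hf|Hf].
    + exists LA, (a :: LB). split; auto. split.
      * intros B [<-|HB']; [split; auto; apply HL; left; auto | auto].
      * intros x. simpl. unfold setI. rewrite Hx. tauto.
    + exists (a :: LA), LB. split.
      * intros B [<-|HB']; [split; auto; apply HL; left; auto | auto].
      * split; auto. intros x. simpl. unfold setI. rewrite Hx. tauto.
Qed.

Lemma dedekind LA LB : (forall A, In A LA -> fam_sub H N A) ->
    (forall B, In B LB -> fam_sup H N B) ->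
    forall x, setmul (fun y => bigcap LA y /\ bigcap LB y) N x <-> bigcap LA x.
Proof.
  intros HA HB x. split.
  - intros (h & n & [Hh _] & Hn & ->). rewrite bigcap_In in *. intros A HA'.
    destruct (sub_props A (HA A HA')) as [[_ [Hm _]] HN].
    apply Hm; [apply Hh; exact HA' | apply HN; exact Hn].
  - intros Hx. destruct (full_sup LB HB x) as (d & n & Hd & Hn & Hdn).
    exists d, n. split; [|split; auto]. split; auto.
    assert (Ed : d = gmul x (ginv n)).
    { rewrite Hdn, <- gmulA, mulV1, mul1r. reflexivity. }
    rewrite Ed. rewrite bigcap_In in *. intros A HA'.
    destruct (sub_props A (HA A HA')) as [[_ [Hm Hi]] HN].
    apply Hm; [apply Hx; exact HA' | apply Hi, HN; exact Hn].
Qed.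

Lemma char X : tilde H X -> ~ full (setmul X N) ->
  exists LA, LA <> [] /\ (forall A, In A LA -> fam_sub H N A) /\ setmul X N = bigcap LA.
Proof.
  intros (L & Hne & HL & ->) Hnf.
  destruct (split_list L HL) as (LA & LB & HA & HB & Hx).
  assert (E : setmul (bigcap L) N = bigcap LA).
  { apply set_ext; intros x. rewrite <- (dedekind LA LB HA HB x).
    split; intros (h & n & Hh & Hn & E); exists h, n; split; auto; apply Hx; auto. }
  exists LA. split; [|split; auto].
  intros ->. apply Hnf. rewrite E. intros x; exact I.
Qed.

Lemma qproj_eq x y : coset N x = coset N y -> qproj N x = qproj N y.
Proof.
  intros E. unfold qproj. revert E. generalize (ex_intro (fun x0 : G => coset N x = coset N x0) x eq_refl).
  generalize (ex_intro (fun x0 : G => coset N y = coset N x0) y eq_refl).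
  intros p q E. revert p q. rewrite E. intros p q. f_equal. apply proof_irrelevance.
Qed.

Lemma coset_mul h n : N n -> coset N (gmul h n) = coset N h.
Proof.
  intros Hn. apply set_ext; intros y. split.
  - intros (m & Hm & ->). exists (gmul n m). split; [apply (proj1 (proj2 NS)); auto|].
    symmetry; apply gmulA.
  - intros (m & Hm & ->). exists (gmul (ginv n) m). split.
    + apply (proj1 (proj2 NS)); auto. apply (proj2 (proj2 NS)); auto.
    + rewrite <- gmulA, (gmulA G n), mulV1, gmul1. reflexivity.
Qed.

Lemma in_coset_of x y : qproj N x = qproj N y -> exists n, N n /\ x = gmul y n.
Proof.
  intros E. apply (f_equal (@proj1_sig _ _)) in E. simpl in E.
  assert (Hx : coset N x x). { exists gone. split. apply (proj1 NS). symmetry; apply mul1r. }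
  rewrite E in Hx. exact Hx.
Qed.

Lemma bar_setmul X : bar N (setmul X N) = bar N X.
Proof.
  apply set_ext; intros q. split.
  - intros (h & (d & n & Hd & Hn & ->) & ->). exists d. split; auto.
    apply qproj_eq. apply coset_mul; auto.
  - intros (h & Hh & ->). exists h. split; auto. exists h, gone. split; auto.
    split. apply (proj1 NS). symmetry; apply mul1r.
Qed.

Lemma bar_bigcap LA : LA <> [] -> (forall A, In A LA -> fam_sub H N A) ->
  bar N (bigcap LA) = bigcap (map (bar N) LA).
Proof.
  intros Hne HA. apply set_ext; intros q. rewrite bigcap_In. split.
  - intros (h & Hh & ->) Q HQ. apply in_map_iff in HQ. destruct HQ as (A & <- & HA').
    exists h. split; [|reflexivity]. rewrite bigcap_In in Hh; apply Hh; exact HA'.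
  - intros Hq. destruct LA as [|a LA']; [congruence|].
    destruct (Hq (bar N a) (or_introl eq_refl)) as (h & Hh & ->).
    exists h. split; auto. rewrite bigcap_In. intros A HA'.
    destruct (Hq (bar N A) (in_map _ _ _ HA')) as (h' & Hh' & E).
    destruct (in_coset_of _ _ E) as (n & Hn & ->).
    destruct (sub_props A (HA A HA')) as [[_ [Hm _]] HN]. apply Hm; [exact Hh' | apply HN; exact Hn].
Qed.

Lemma lift Ks : (forall K0, In K0 Ks -> bar_family H N K0) ->
  exists LA, Ks = map (bar N) LA /\ (forall A, In A LA -> fam_sub H N A).
Proof.
  induction Ks as [|k Ks IH]; intros HK.
  - exists []. split; auto. intros A [].
  - destruct IH as (LA & E & HA). { intros K0 HK0; apply HK; right; auto. }
    destruct (HK k (or_introl eq_refl)) as (a & Ha & ->).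
    exists (a :: LA). split. simpl; rewrite E; auto.
    intros A [<-|HA']; auto.
Qed.

End S.

Theorem lemma3p18 (G : group) (N : set G) (H : family G) :
  is_normal N ->
  family_of_proper_subgroups H ->
  strongly_divided_by H N ->
  divided_by (tilde H) N /\
  fam_sup (tilde H) N = tilde (fam_sup H N) /\
  bar_family (tilde H) N = tilde (bar_family H N).
Proof.
  intros [NS _] fps sd. split; [split|split].
  - intros X [HX Hnf]. destruct (char G N H NS fps sd X HX Hnf) as (LA & Hne & HA & ->).
    exists LA. split; auto. split; auto. intros K0 HK0; apply (HA K0 HK0).
  - intros X K0 [HX Hnf] [(L & Hne' & HL & ->) _].
    destruct (char G N H NS fps sd X HX Hnf) as (LA & Hne & HA & ->).
    exists (LA ++ L). split.
    + destruct LA; [congruence|discriminate].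
    + split; [|symmetry; apply bigcap_app].
      intros A HA'. apply in_app_or in HA'. destruct HA' as [HA'|HA']; [apply (HA A HA') | apply HL; exact HA'].
  - apply fam_ext; intros Q. split.
    + intros [(L & Hne & HL & ->) Hf]. exists L. split; auto. split; auto.
      intros K0 HK0. split; auto. intros x.
      apply (setmul_mono (bigcap L)); [|apply Hf].
      intros y Hy. rewrite bigcap_In in Hy; apply Hy; exact HK0.
    + intros (L & Hne & HL & ->). split.
      * exists L. split; auto. split; auto. intros K0 HK0; apply HL; auto.
      * apply (full_sup G N H NS sd); auto.
  - apply fam_ext; intros Q. split.
    + intros (X & [HX Hnf] & ->).
      destruct (char G N H NS fps sd X HX Hnf) as (LA & Hne & HA & E).
      rewrite <- (bar_setmul G N NS), E, (bar_bigcap G N H NS fps sd LA Hne HA).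
      exists (map (bar N) LA). split; [destruct LA; [congruence|discriminate]|].
      split; auto. intros K0 HK0. apply in_map_iff in HK0. destruct HK0 as (A & <- & HA').
      exists A; auto.
    + intros (Ks & Hne & HK & ->).
      destruct (lift G N H Ks HK) as (LA & -> & HA).
      assert (Hne' : LA <> []) by (intro Hc; apply Hne; rewrite Hc; reflexivity).
      exists (bigcap LA). split.
      * split.
        -- exists LA. split; auto. split; auto. intros K0 HK0; apply (HA K0 HK0).
        -- destruct LA as [|a LA']; [congruence|].
           intros Hf. apply (proj2 (HA a (or_introl eq_refl))).
           intros x. apply (setmul_mono (bigcap (a :: LA'))); auto.
           intros y [Hy _]; exact Hy.
      * symmetry. apply (bar_bigcap G N H NS fps sd LA Hne' HA).
Qed.
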